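(* Let $u,v$ be positive real numbers. Then $$\sum_{\substack{j\in\mathbb{Z}\\ \frac12-v\le j\le u-\frac12}}\frac{1}{\sqrt{(u-j)(v+j)}}\le 12.$$ *)

(* Defs.v *)
From Stdlib Require Import Reals ZArith List.
Open Scope R_scope.

Definition term (u v : R) (j : Z) : R := / sqrt ((u - IZR j) * (v + IZR j)).

Definition in_range (u v : R) (j : Z) : bool :=
  if Rle_dec (1/2 - v) (IZR j) then
    if Rle_dec (IZR j) (u - 1/2) then true else false
  else false.

(* A bound M such that every j in the range satisfies |j| <= M. *)
Definition bound (u v : R) : Z := (Z.abs (up u) + Z.abs (up v))%Z.

Definition Zwindow (M : Z) : list Z :=
  map (fun k : nat => (Z.of_nat k - M)%Z) (seq 0 (Z.to_nat (2 * M + 1))).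

Definition range_sum (u v : R) : R :=
  fold_right Rplus 0
    (map (term u v) (filter (in_range u v) (Zwindow (bound u v)))).

(* Main.v *)
Require Import Defs.
From Stdlib Require Import Reals Lra Lia Psatz ZArith List.
Open Scope R_scope.

Lemma key a b S : 1/2 <= a -> a <= b -> a + b = S ->
  / sqrt (a*b) <= 2 / sqrt (S/2) *
   (sqrt (Rmin (a+1/2) ((S+1)/2)) - sqrt (Rmin (a-1/2) ((S+1)/2))).
Proof.
  intros Ha Hab HS.
  rewrite (Rmin_left (a+1/2)) by lra. rewrite (Rmin_left (a-1/2)) by lra.
  rewrite sqrt_mult by lra.
  assert (Hp2 := sqrt_sqrt (a+1/2) ltac:(lra)).
  assert (Hq2 := sqrt_sqrt (a-1/2) ltac:(lra)).
  assert (Hr2 := sqrt_sqrt a ltac:(lra)).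
  assert (Hs2 := sqrt_sqrt (S/2) ltac:(lra)).
  assert (Hp := sqrt_pos (a+1/2)). assert (Hq := sqrt_pos (a-1/2)).
  assert (Hr := sqrt_lt_R0 a ltac:(lra)). assert (Hs := sqrt_lt_R0 (S/2) ltac:(lra)).
  assert (Hsb : sqrt (S/2) <= sqrt b) by (apply sqrt_le_1_alt; lra).
  set (p := sqrt (a+1/2)) in *. set (q := sqrt (a-1/2)) in *.
  set (r := sqrt a) in *. set (s := sqrt (S/2)) in *.
  assert (Hsq : (p + q) * (p + q) <= (2 * r) * (2 * r)) by nra.
  assert (Hpq : p + q <= 2 * r).
  { destruct (Rle_lt_dec (p+q) (2*r)) as [h|h]; auto. nra. }
  assert (Hpq1 : (p - q) * (p + q) = 1) by nra.
  assert (Hpq0 : q <= p) by (unfold p, q; apply sqrt_le_1_alt; lra).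
  assert (H1 : 1 <= 2 * r * (p - q)).
  { rewrite <- Hpq1. rewrite (Rmult_comm (2*r)). apply Rmult_le_compat_l; lra. }
  apply Rle_trans with (/ (r * s)).
  - apply Rinv_le_contravar; nra.
  - rewrite Rinv_mult. unfold Rdiv.
    apply Rmult_le_reg_l with (r * s); [nra|].
    idtac.
    replace (r * s * (/ r * / s)) with 1 by (field; lra).
    replace (r * s * (2 * / s * (p - q))) with (2 * r * (p - q)) by (field; lra). lra.
Qed.

Lemma sum_filter {A} (p : A -> bool) (f : A -> R) l :
  fold_right Rplus 0 (map f (filter p l)) =
  fold_right Rplus 0 (map (fun x => if p x then f x else 0) l).
Proof. induction l as [|x l IH]; simpl; auto. destruct (p x); simpl; rewrite IH; ring. Qed.

Lemma sum_tel (g T : nat -> R) : (forall k, g k <= T k - T (S k)) ->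
  forall n s, fold_right Rplus 0 (map g (seq s n)) <= T s - T (s + n)%nat.
Proof.
  intros H n; induction n as [|n IH]; intros s; simpl.
  - rewrite Nat.add_0_r; lra.
  - specialize (IH (S s)). rewrite Nat.add_succ_r. simpl in IH. specialize (H s). lra.
Qed.

Lemma sum_tel_Z (h T : R -> R) M : (forall j : Z, h (IZR j) <= T (IZR j) - T (IZR j + 1)) ->
  forall n, fold_right Rplus 0 (map (fun k : nat => h (IZR (Z.of_nat k - M))) (seq 0 n))
   <= T (IZR (Z.of_nat 0 - M)) - T (IZR (Z.of_nat (0 + n) - M)).
Proof.
  intros H n. apply (sum_tel _ (fun k => T (IZR (Z.of_nat k - M)))).
  intros k. replace (Z.of_nat (S k) - M)%Z with ((Z.of_nat k - M) + 1)%Z by lia.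
  rewrite plus_IZR. apply H.
Qed.

Theorem lemma6p7 (u v : R) (hu : 0 < u) (hv : 0 < v) :
  range_sum u v <= 12.
Proof.
  unfold range_sum. rewrite sum_filter. unfold Zwindow. rewrite map_map.
  set (h := fun x : R => if Rle_dec (1/2 - v) x then if Rle_dec x (u - 1/2) then / sqrt ((u - x) * (v + x)) else 0 else 0).
  assert (Hh : forall k : nat, (fun x : Z => if in_range u v x then term u v x else 0)
      (Z.of_nat k - Defs.bound u v)%Z = h (IZR (Z.of_nat k - Defs.bound u v))).
  { intros k. unfold in_range, term, h. simpl.
    destruct (Rle_dec _ _); [destruct (Rle_dec _ _)|]; reflexivity. }
  rewrite (map_ext _ _ Hh).
  set (SS := u + v).
  destruct (Rlt_le_dec SS 1) as [HS|HS].
  - eapply Rle_trans. apply (sum_tel_Z h (fun _ => 0)).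
    + intros j. unfold h. destruct (Rle_dec _ _); [destruct (Rle_dec _ _)|]; try lra.
      unfold SS in HS; lra.
    + lra.
  - set (K := (SS+1)/2). set (A := 2 / sqrt (SS/2)).
    set (psi := fun x => sqrt (Rmin x K)).
    assert (Hpsi : forall x y, x <= y -> psi x <= psi y).
    { intros x y Hxy; unfold psi; apply sqrt_le_1_alt.
      unfold Rmin; destruct (Rle_dec x K); destruct (Rle_dec y K); lra. }
    assert (Hpsi0 : forall x, 0 <= psi x <= sqrt K).
    { intros x; unfold psi; split. apply sqrt_pos. apply sqrt_le_1_alt. apply Rmin_r. }
    assert (HA : 0 < A) by (unfold A; apply Rdiv_lt_0_compat; [lra| apply sqrt_lt_R0; lra]).
    eapply Rle_trans.
    apply (sum_tel_Z h (fun x => A * psi (u - x + 1/2) - A * psi (v + x - 1/2))).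
    + intros j. set (x := IZR j).
      replace (u - (x + 1) + 1/2) with (u - x - 1/2) by lra.
      replace (v + (x + 1) - 1/2) with (v + x + 1/2) by lra.
      assert (P1 : 0 <= A * (psi (u - x + 1/2) - psi (u - x - 1/2))).
      { apply Rmult_le_pos; [lra|]. assert (psi (u - x - 1/2) <= psi (u - x + 1/2)) by (apply Hpsi; lra). lra. }
      assert (P2 : 0 <= A * (psi (v + x + 1/2) - psi (v + x - 1/2))).
      { apply Rmult_le_pos; [lra|]. assert (psi (v + x - 1/2) <= psi (v + x + 1/2)) by (apply Hpsi; lra). lra. }
      unfold h. destruct (Rle_dec _ _); [destruct (Rle_dec _ _)|]; try lra.
      destruct (Rle_dec (u - x) (v + x)).
      * assert (Hk := key (u - x) (v + x) SS ltac:(lra) ltac:(lra) ltac:(unfold SS; ring)).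
        change (2 / sqrt (SS/2)) with A in Hk. change ((SS+1)/2) with K in Hk.
        change (sqrt (Rmin (u - x + 1/2) K)) with (psi (u - x + 1/2)) in Hk.
        change (sqrt (Rmin (u - x - 1/2) K)) with (psi (u - x - 1/2)) in Hk.
        lra.
      * assert (Hk := key (v + x) (u - x) SS ltac:(lra) ltac:(lra) ltac:(unfold SS; ring)).
        rewrite Rmult_comm in Hk.
        change (2 / sqrt (SS/2)) with A in Hk. change ((SS+1)/2) with K in Hk.
        change (sqrt (Rmin (v + x + 1/2) K)) with (psi (v + x + 1/2)) in Hk.
        change (sqrt (Rmin (v + x - 1/2) K)) with (psi (v + x - 1/2)) in Hk.
        lra.
    + assert (B := Hpsi0 (u - IZR (Z.of_nat 0 - Defs.bound u v) + 1/2)).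
      assert (B2 := Hpsi0 (u - IZR (Z.of_nat (0 + Z.to_nat (2 * Defs.bound u v + 1)) - Defs.bound u v) + 1/2)).
      assert (B3 := Hpsi0 (v + IZR (Z.of_nat 0 - Defs.bound u v) - 1/2)).
      assert (B4 := Hpsi0 (v + IZR (Z.of_nat (0 + Z.to_nat (2 * Defs.bound u v + 1)) - Defs.bound u v) - 1/2)).
      assert (HK : A * sqrt K <= 3).
      { unfold A. assert (sqrt K <= sqrt (SS/2) * sqrt 2).
        { rewrite <- sqrt_mult by lra. apply sqrt_le_1_alt. unfold K; lra. }
        assert (0 < sqrt (SS/2)) by (apply sqrt_lt_R0; lra).
        assert (sqrt 2 <= 1.5).
        { rewrite <- (sqrt_square 1.5) by lra. apply sqrt_le_1_alt; lra. }
        unfold Rdiv. rewrite Rmult_assoc.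
        apply Rle_trans with (2 * (/ sqrt (SS/2) * (sqrt (SS/2) * sqrt 2))).
        - apply Rmult_le_compat_l; [lra|]. apply Rmult_le_compat_l; [left; apply Rinv_0_lt_compat; lra|lra].
        - replace (/ sqrt (SS/2) * (sqrt (SS/2) * sqrt 2)) with (sqrt 2) by (field; lra). lra. }
      nra.
Qed.
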